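(* Let $D$ be a division algebra and let $\sigma_1,\ldots,\sigma_n$ be pairwise commuting automorphisms of $D$. If the tuple $(\sigma_1,\ldots,\sigma_r)$ is not automorphically normalizable over $D$ for some integer $r\le n$, then the tuple $(\sigma_1,\ldots,\sigma_n)$ is not automorphically normalizable over $D$.
   Context: All rings are associative with unity. For commuting automorphisms $\tau_1,\ldots,\tau_k$ of $D$, $D[t_1,\ldots,t_k;\tau_1,\ldots,\tau_k]$ is the skew polynomial ring in pairwise commuting variables with $t_ia=\tau_i(a)t_i$ for $a\in D$. For a ring $S\supseteq D$, $a\in S$ is automorphic over $D$ with respect to $\tau$ if $ab=\tau(b)a$ for all $b\in D$. Commuting $a_1,\ldots,a_m\in S$ are (left) algebraically independent over $D$ if monomials in them are left linearly independent over $D$. $S$ is automorphically normalizable over $D$ if there exist $m\ge0$ and commuting $a_1,\ldots,a_m\in S$, automorphic over $D$ with respect to pairwise commuting automorphisms, left algebraically independent over $D$, such that $S$ is finitely generated as a left module over the subring $D[a_1,\ldots,a_m]$ generated by $D\cup\{a_1,\ldots,a_m\}$. A tuple $(\tau_1,\ldots,\tau_k)$ of commuting automorphisms is automorphically normalizable over $D$ if every quotient of $D[t_1,\ldots,t_k;\tau_1,\ldots,\tau_k]$ by a proper two-sided ideal is automorphically normalizable over $D$. *)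

(* Defs.v *)
From HB Require Import structures.
From mathcomp Require Import all_boot all_order all_algebra.
From mathcomp Require Import mpoly.
Set Implicit Arguments.
Unset Strict Implicit.
Unset Printing Implicit Defensive.
Import GRing.Theory.
Local Open Scope ring_scope.

Definition is_division_ring (D : unitRingType) : Prop :=
  forall x : D, x != 0 -> x \is a GRing.unit.

Definition is_ring_automorphism (D : nzRingType) (s : {rmorphism D -> D}) : Prop :=
  bijective s.

Definition commuting_automorphisms (D : nzRingType) (k : nat)
    (s : 'I_k -> {rmorphism D -> D}) : Prop :=
  (forall i, is_ring_automorphism (s i)) /\
  (forall i j (x : D), s i (s j x) = s j (s i x)).

Section Normalizable.
Variables (D : nzRingType) (S : nzRingType) (f : D -> S).

Definition smonom (m : nat) (a : 'I_m -> S) (e : 'X_{1..m}) : S :=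
  \prod_(i < m) a i ^+ e i.

Definition automorphic (tau : D -> D) (a : S) : Prop :=
  forall b : D, a * f b = f (tau b) * a.

Definition left_alg_indep (m : nat) (a : 'I_m -> S) : Prop :=
  forall (s : seq 'X_{1..m}) (c : 'X_{1..m} -> D),
    uniq s -> \sum_(e <- s) f (c e) * smonom a e = 0 ->
    forall e, e \in s -> c e = 0.

Inductive in_gen_subring (m : nat) (a : 'I_m -> S) : S -> Prop :=
  | gsub_D (d : D) : in_gen_subring a (f d)
  | gsub_a (i : 'I_m) : in_gen_subring a (a i)
  | gsub_0 : in_gen_subring a 0
  | gsub_1 : in_gen_subring a 1
  | gsub_opp x : in_gen_subring a x -> in_gen_subring a (- x)
  | gsub_add x y : in_gen_subring a x -> in_gen_subring a y ->
      in_gen_subring a (x + y)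
  | gsub_mul x y : in_gen_subring a x -> in_gen_subring a y ->
      in_gen_subring a (x * y).

Definition fin_gen_left_module (m : nat) (a : 'I_m -> S) : Prop :=
  exists gens : seq S, forall x : S,
    exists r : 'I_(size gens) -> S,
      (forall j, in_gen_subring a (r j)) /\
      x = \sum_(j < size gens) r j * gens`_j.

Definition automorphically_normalizable : Prop :=
  exists (m : nat) (a : 'I_m -> S) (tau : 'I_m -> {rmorphism D -> D}),
    [/\ commuting_automorphisms tau,
        (forall i j, a i * a j = a j * a i),
        (forall i, automorphic (tau i) (a i)),
        left_alg_indep a &
        fin_gen_left_module a].

End Normalizable.

(* Its elements are represented by {mpoly D[k]} (finitely supported     *)
(* D-valued coefficient functions on exponent vectors, written          *)
(* sum_e c_e t^e with coefficients on the left); addition is that of    *)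
(* {mpoly D[k]}, and the (twisted) multiplication is skew_mul below,    *)
(* determined by t_i d = tau_i(d) t_i:                                  *)
(*    (c t^a)(d t^b) = c tau^a(d) t^(a+b).                              *)

Section SkewPoly.
Variables (D : nzRingType) (k : nat) (tau : 'I_k -> {rmorphism D -> D}).

Definition tau_pow (e : 'X_{1..k}) : D -> D :=
  foldr (fun i g => iter (e i) (tau i) \o g) id (enum 'I_k).

Definition skew_mul (p q : {mpoly D[k]}) : {mpoly D[k]} :=
  \sum_(a <- msupp p) \sum_(b <- msupp q)
     (p@_a * tau_pow a q@_b) *: 'X_[(a + b)%MM].

Definition skew_one : {mpoly D[k]} := 1%:MP.

Definition skew_const (d : D) : {mpoly D[k]} := d%:MP.

(* pi : D[t;tau] -> S is a surjective ring homomorphism; quotients of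
   D[t;tau] by proper two-sided ideals are exactly (up to isomorphism)
   the nonzero rings S admitting such a pi (S = D[t;tau]/ker pi). *)
Definition skew_quotient_map (S : nzRingType) (pi : {mpoly D[k]} -> S) : Prop :=
  [/\ forall p q, pi (p + q) = pi p + pi q,
      pi skew_one = 1,
      forall p q, pi (skew_mul p q) = pi p * pi q &
      forall y : S, exists p, pi p = y].

Definition tuple_automorphically_normalizable : Prop :=
  forall (S : nzRingType) (pi : {mpoly D[k]} -> S),
    skew_quotient_map pi ->
    automorphically_normalizable (fun d => pi (skew_const d)).

End SkewPoly.

(* Main.v *)
Require Import Defs.
From mathcomp Require Import all_boot all_order all_algebra.
From mathcomp Require Import mpoly.
From HB Require Import structures.
From Stdlib Require Import FunctionalExtensionality.
Set Implicit Arguments.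
Unset Strict Implicit.
Unset Printing Implicit Defensive.
Import GRing.Theory.
Local Open Scope ring_scope.

Section Gen.
Variables (D : nzRingType) (k : nat) (tau : 'I_k -> {rmorphism D -> D}).

Lemma foldr_tau0 (e : 'X_{1..k}) (s : seq 'I_k) :
  foldr (fun i g => iter (e i) (tau i) \o g) id s 0 = 0.
Proof.
elim: s => [|i s IH] //=; rewrite IH.
by elim: (e i) => [|m IHm] //=; rewrite IHm rmorph0.
Qed.

Lemma foldr_tau1 (e : 'X_{1..k}) (s : seq 'I_k) :
  foldr (fun i g => iter (e i) (tau i) \o g) id s 1 = 1.
Proof.
elim: s => [|i s IH] //=; rewrite IH.
by elim: (e i) => [|m IHm] //=; rewrite IHm rmorph1.
Qed.

Lemma tau_pow0 e : tau_pow tau e 0 = 0. Proof. exact: foldr_tau0. Qed.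
Lemma tau_pow1 e : tau_pow tau e 1 = 1. Proof. exact: foldr_tau1. Qed.

Lemma foldr_tau_id (s : seq 'I_k) d :
  foldr (fun i g => iter ((0%MM : 'X_{1..k}) i) (tau i) \o g) id s d = d.
Proof. by elim: s => [|i s IH] //=; rewrite mnm0E /= IH. Qed.

Lemma tau_pow_0 d : tau_pow tau 0%MM d = d. Proof. exact: foldr_tau_id. Qed.

Lemma foldr_tauU (j : 'I_k) (s : seq 'I_k) d : uniq s ->
  foldr (fun i g => iter (U_(j)%MM i) (tau i) \o g) id s d =
  if j \in s then tau j d else d.
Proof.
elim: s => [|i s IH] //= /andP [nis us]; rewrite IH // in_cons mnm1E.
case: (eqVneq j i) => [eji|nji] /=; first by rewrite eji (negbTE nis).
by [].
Qed.

Lemma tau_powU j d : tau_pow tau U_(j)%MM d = tau j d.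
Proof. by rewrite /tau_pow foldr_tauU ?enum_uniq // mem_enum. Qed.

Lemma skew_mulXX c d a b :
  skew_mul tau (c *: 'X_[a]) (d *: 'X_[b]) = (c * tau_pow tau a d) *: 'X_[(a + b)%MM].
Proof.
rewrite /skew_mul.
have [->|nc] := eqVneq c 0; first by rewrite scale0r msupp0 big_nil mul0r scale0r.
have [->|nd] := eqVneq d 0.
  by rewrite scale0r msupp0 big1 ?tau_pow0 ?mulr0 ?scale0r // => i _; rewrite big_nil.
rewrite !msuppMCX // !big_seq1 !mcoeffZ !mcoeffX !eqxx !mulr1.
by [].
Qed.

Lemma skew_mulXX1 c a b :
  skew_mul tau (c *: 'X_[a]) 'X_[b] = c *: 'X_[(a + b)%MM].
Proof. by rewrite -[X in skew_mul _ _ X]scale1r skew_mulXX tau_pow1 mulr1. Qed.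

Lemma skew_mul1XX d a b :
  skew_mul tau 'X_[a] (d *: 'X_[b]) = tau_pow tau a d *: 'X_[(a + b)%MM].
Proof. by rewrite -[X in skew_mul _ X _]scale1r skew_mulXX mul1r. Qed.

Lemma mpolyCX (c : D) : c%:MP_[k] = c *: 'X_[0%MM].
Proof. by rewrite -alg_mpolyC mpolyX0. Qed.

End Gen.

Section Main.
Variables (D : nzRingType) (n r : nat) (hrn : (r <= n)%N)
  (sigma : 'I_n -> {rmorphism D -> D}).
Definition taur := fun i : 'I_r => sigma (widen_ord hrn i).
Variables (S : nzRingType) (pi : {mpoly D[r]} -> S)
  (Hpi : skew_quotient_map taur pi).

Lemma piD p q : pi (p + q) = pi p + pi q. Proof. by case: Hpi. Qed.
Lemma piM p q : pi (skew_mul taur p q) = pi p * pi q. Proof. by case: Hpi. Qed.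
Lemma pi0 : pi 0 = 0.
Proof. have := piD 0 0; rewrite addr0 => H; apply: (addrI (pi 0)); by rewrite -H addr0. Qed.
Lemma piB p q : pi (p - q) = pi p - pi q.
Proof.
apply/eqP; rewrite eq_sym subr_eq -piD subrK //.
Qed.

Lemma pi_sum (I : Type) (s : seq I) (F : I -> {mpoly D[r]}) :
  pi (\sum_(i <- s) F i) = \sum_(i <- s) pi (F i).
Proof.
elim: s => [|i s IH]; first by rewrite !big_nil pi0.
by rewrite !big_cons piD IH.
Qed.

Definition fc (d : D) : S := pi (d%:MP).
Lemma fc_additive : additive fc.
Proof. by move=> x y; rewrite /fc mpolyCB piB. Qed.
HB.instance Definition _ := GRing.isAdditive.Build D S fc fc_additive.

Definition g (m : 'X_{1..r}) : S := pi 'X_[m].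

Lemma piCX c m : pi (c *: 'X_[m]) = fc c * g m.
Proof.
rewrite /fc /g mpolyCX -piM -[X in skew_mul _ _ X]scale1r skew_mulXX.
by rewrite tau_pow_0 mulr1 add0m.
Qed.

Lemma gD a b : g (a + b)%MM = g a * g b.
Proof.
rewrite /g -piM -[X in skew_mul _ X _]scale1r -[X in skew_mul _ _ X]scale1r.
by rewrite skew_mulXX tau_pow1 mulr1 scale1r.
Qed.

Lemma fcM x y : fc (x * y) = fc x * fc y.
Proof.
rewrite /fc -piM !mpolyCX skew_mulXX tau_pow_0 addm0.
by [].
Qed.

Lemma fc1 : fc 1 = 1.
Proof. by case: Hpi. Qed.

Definition h (i : 'I_n) : S :=
  if insub (val i) is Some j then g U_(j)%MM else 0.

Lemma h_widen (j : 'I_r) : h (widen_ord hrn j) = g U_(j)%MM.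
Proof. by rewrite /h /= valK. Qed.

Lemma h_comm i d : h i * fc d = fc (sigma i d) * h i.
Proof.
rewrite /h; case: insubP => [j _ vj|_]; last by rewrite mul0r mulr0.
have -> : i = widen_ord hrn j by apply: val_inj.
rewrite /g /fc -!piM !mpolyCX.
rewrite skew_mulXX1 skew_mul1XX tau_powU.
by rewrite addm0 add0m.
Qed.

Lemma h_comm2 i j : h i * h j = h j * h i.
Proof.
rewrite /h; case: insubP => [i' _ _|_]; last by rewrite mul0r mulr0.
case: insubP => [j' _ _|_]; last by rewrite mul0r mulr0.
by rewrite -!gD addmC.
Qed.

Lemma hX_comm i k d : h i ^+ k * fc d = fc (iter k (sigma i) d) * h i ^+ k.
Proof.
elim: k => [|k IH]; first by rewrite !expr0 mul1r mulr1.
by rewrite exprS -mulrA IH mulrA h_comm -mulrA -exprS.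
Qed.

Lemma prod_comm (a : 'X_{1..n}) (s : seq 'I_n) d :
  (\prod_(i <- s) h i ^+ a i) * fc d =
  fc (foldr (fun i g => iter (a i) (sigma i) \o g) id s d) *
  \prod_(i <- s) h i ^+ a i.
Proof.
elim: s => [|i s IH]; first by rewrite !big_nil mul1r mulr1.
by rewrite !big_cons -mulrA IH mulrA hX_comm -mulrA.
Qed.

Lemma mmap1_comm a d : mmap1 h a * fc d = fc (tau_pow sigma a d) * mmap1 h a.
Proof.
have E : enum 'I_n = index_enum 'I_n.
  by rewrite -deprecated_filter_index_enum filter_predT.
by rewrite /mmap1 /tau_pow E prod_comm.
Qed.

Lemma prod_split (I : Type) (s : seq I) (x y : I -> S) :
  (forall i j, GRing.comm (y i) (x j)) ->
  \prod_(i <- s) (x i * y i) = \prod_(i <- s) x i * \prod_(i <- s) y i.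
Proof.
move=> C; elim: s => [|i s IH]; first by rewrite !big_nil mulr1.
rewrite !big_cons IH -!mulrA; congr (_ * _); rewrite !mulrA; congr (_ * _).
by apply: commr_prod => j _; apply: C.
Qed.

Lemma mmap1D a b : mmap1 h (a + b)%MM = mmap1 h a * mmap1 h b.
Proof.
rewrite /mmap1 -prod_split; last by move=> i j; apply: commrX; apply/commr_sym/commrX; exact: h_comm2.
by apply: eq_bigr => i _; rewrite mnmDE exprD.
Qed.

Local Notation pin := (mmap fc h).

Lemma pinCX c m : pin (c *: 'X_[m]) = fc c * mmap1 h m.
Proof.
have [->|nc] := eqVneq c 0; first by rewrite scale0r raddf0 raddf0 mul0r.
by rewrite /mmap msuppMCX // big_seq1 mcoeffZ mcoeffX eqxx mulr1.
Qed.

Lemma pinM p q : pin (skew_mul sigma p q) = pin p * pin q.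
Proof.
have -> : pin p * pin q = \sum_(a <- msupp p) \sum_(b <- msupp q)
    fc p@_a * mmap1 h a * (fc q@_b * mmap1 h b).
  by rewrite /mmap mulr_suml; apply: eq_bigr => a _; rewrite mulr_sumr.
rewrite /skew_mul raddf_sum; apply: eq_bigr => a _.
rewrite raddf_sum; apply: eq_bigr => b _.
rewrite /= pinCX fcM mmap1D !mulrA; congr (_ * _); rewrite -!mulrA; congr (_ * _).
by rewrite mmap1_comm.
Qed.

Lemma pinC d : pin d%:MP = fc d.
Proof. exact: mmapC. Qed.

Lemma pin_surj y : exists p, pin p = y.
Proof.
pose Im := fun y => exists p, pin p = y.
have ImD : forall y1 y2, Im y1 -> Im y2 -> Im (y1 + y2).
  by move=> _ _ [p1 <-] [p2 <-]; exists (p1 + p2); rewrite raddfD.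
have ImM : forall y1 y2, Im y1 -> Im y2 -> Im (y1 * y2).
  by move=> _ _ [p1 <-] [p2 <-]; exists (skew_mul sigma p1 p2); rewrite pinM.
have Im0 : Im 0 by exists 0; rewrite raddf0.
have Im1 : Im 1 by exists 1%:MP; rewrite pinC fc1.
have ImC : forall c, Im (fc c) by move=> c; exists c%:MP; rewrite pinC.
have ImU : forall j : 'I_r, Im (g U_(j)%MM).
  move=> j; exists 'X_[U_(widen_ord hrn j)]; rewrite -[X in pin X]scale1r pinCX fc1 mul1r.
  by rewrite mmap1U h_widen.
have ImG : forall m, Im (g m).
  move=> m; rewrite (multinomUE_id m).
  have g0 : g 0%MM = 1 by rewrite /g mpolyX0; case: Hpi.
  rewrite (big_morph g gD g0); apply: big_ind => // i _.
  elim: (m i) => [|k IH]; first by rewrite mulm0n g0.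
  by rewrite mulmS gD; apply: ImM.
case: Hpi => _ _ _ /(_ y) [p <-].
rewrite {1}(mpolyE p) pi_sum; apply: (big_ind Im) => // m _.
by rewrite piCX; apply: ImM.
Qed.

Lemma quot_n : skew_quotient_map sigma pin.
Proof.
split.
- exact: raddfD.
- by rewrite /skew_one pinC fc1.
- exact: pinM.
- exact: pin_surj.
Qed.

End Main.

Local Open Scope ring_scope.

Theorem proposition5p2 (D : unitRingType) (n : nat)
    (sigma : 'I_n -> {rmorphism D -> D}) (r : nat) (hrn : (r <= n)%N) :
  is_division_ring D ->
  commuting_automorphisms sigma ->
  ~ tuple_automorphically_normalizable
      (fun i : 'I_r => sigma (widen_ord hrn i)) ->
  ~ tuple_automorphically_normalizable sigma.
Proof.
move=> _ _ Hr Hn; apply: Hr => S pi Hpi.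
have H := Hn S _ (quot_n Hpi).
match type of H with automorphically_normalizable ?f =>
  have -> : (fun d : D => pi (skew_const r d)) = f end.
  apply: functional_extensionality => d; rewrite /skew_const (pinC Hpi) /fc /skew_const //.
exact: H.
Qed.
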